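(* Let $S_1=(-y+x^2-y^2)\frac{\partial}{\partial x}+x(1+2y)\frac{\partial}{\partial y}$, let $H_1(x,y)=\frac{x^2+y^2}{1+2y}$, and for $\epsilon\in\mathbb{R}$ let $$\Phi_{1,\epsilon}(x,y)=\left(\frac{-2\epsilon x^{2}+(1-\epsilon^{2})x-2\epsilon y^{2}-2\epsilon y}{D(x,y)},\ \frac{-2\epsilon^{2}x^{2}+2\epsilon x-2\epsilon^{2}y^{2}+(1-\epsilon^{2})y}{D(x,y)}\right),$$ $D(x,y)=4\epsilon^{2}x^{2}+4\epsilon^{2}y^{2}+4\epsilon^{2}y+\epsilon^{2}-4\epsilon x+1$, be the KHK map of $S_1$. Let $Y_1=x(1+2y)\frac{\partial}{\partial x}+(y-x^2+y^2)\frac{\partial}{\partial y}$ and let $\Psi_{1,\delta}$ be the KHK map of $Y_1$ with step $\delta$. Then: (a) $H_1$ is a first integral of $\Phi_{1,\epsilon}$; (b) $S_1$ is a Lie symmetry of $\Phi_{1,\epsilon}$; (c) $\Phi_{1,\epsilon}$ has an invariant measure with density $\nu=1/(1+2y)^2$; (d) for all $\epsilon,\delta\in\mathbb{R}$, $\Psi_{1,\delta}\circ\Phi_{1,\epsilon}=\Phi_{1,\epsilon}\circ\Psi_{1,\delta}$.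
   Context: The KHK map with step $\epsilon$ of a quadratic planar vector field $X$ is $\mathbf{x}\mapsto\mathbf{x}+2\epsilon\left(I-\epsilon\,\mathrm{D}X(\mathbf{x})\right)^{-1}X(\mathbf{x})$, where $\mathrm{D}X$ is the Jacobian matrix of $X$. A function $H$ is a first integral of a map $F$ if $H\circ F=H$. A vector field $X$ is a Lie symmetry of $F$ if $X(F(\mathbf{x}))=DF(\mathbf{x})\,X(\mathbf{x})$. *)

(* Defs.v *)
From Stdlib Require Import Reals.
From Coquelicot Require Import Coquelicot.
Open Scope R_scope.

Definition J11 (F : R -> R -> R * R) (x y : R) : R := Derive (fun t => fst (F t y)) x.
Definition J12 (F : R -> R -> R * R) (x y : R) : R := Derive (fun t => fst (F x t)) y.
Definition J21 (F : R -> R -> R * R) (x y : R) : R := Derive (fun t => snd (F t y)) x.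
Definition J22 (F : R -> R -> R * R) (x y : R) : R := Derive (fun t => snd (F x t)) y.

Definition jdet (F : R -> R -> R * R) (x y : R) : R :=
  J11 F x y * J22 F x y - J12 F x y * J21 F x y.

(* det (I - eps DX(x,y)); the KHK map is defined where this is nonzero. *)
Definition khk_det (eps : R) (X : R -> R -> R * R) (x y : R) : R :=
  (1 - eps * J11 X x y) * (1 - eps * J22 X x y) - eps ^ 2 * J12 X x y * J21 X x y.

(* KHK map: p |-> p + 2 eps (I - eps DX(p))^{-1} X(p), with the 2x2 inverse
   written out as adjugate / determinant. *)
Definition khk (eps : R) (X : R -> R -> R * R) (x y : R) : R * R :=
  let v1 := fst (X x y) in
  let v2 := snd (X x y) in
  let d := khk_det eps X x y in
  (x + 2 * eps * ((1 - eps * J22 X x y) * v1 + eps * J12 X x y * v2) / d,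
   y + 2 * eps * (eps * J21 X x y * v1 + (1 - eps * J11 X x y) * v2) / d).

Definition S1 (x y : R) : R * R := (- y + x ^ 2 - y ^ 2, x * (1 + 2 * y)).

Definition H1 (x y : R) : R := (x ^ 2 + y ^ 2) / (1 + 2 * y).

Definition nu1 (x y : R) : R := 1 / (1 + 2 * y) ^ 2.

Definition Dphi (eps x y : R) : R :=
  4 * eps ^ 2 * x ^ 2 + 4 * eps ^ 2 * y ^ 2 + 4 * eps ^ 2 * y + eps ^ 2 - 4 * eps * x + 1.

Definition Phi1 (eps : R) (x y : R) : R * R :=
  ((- 2 * eps * x ^ 2 + (1 - eps ^ 2) * x - 2 * eps * y ^ 2 - 2 * eps * y) / Dphi eps x y,
   (- 2 * eps ^ 2 * x ^ 2 + 2 * eps * x - 2 * eps ^ 2 * y ^ 2 + (1 - eps ^ 2) * y) / Dphi eps x y).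

Definition Y1 (x y : R) : R * R := (x * (1 + 2 * y), y - x ^ 2 + y ^ 2).

Definition Psi1 (delta : R) (x y : R) : R * R := khk delta Y1 x y.

Definition lie_symmetry_at (X F : R -> R -> R * R) (x y : R) : Prop :=
  let p := F x y in
  fst (X (fst p) (snd p)) = J11 F x y * fst (X x y) + J12 F x y * snd (X x y) /\
  snd (X (fst p) (snd p)) = J21 F x y * fst (X x y) + J22 F x y * snd (X x y).

Definition inv_measure_at (nu : R -> R -> R) (F : R -> R -> R * R) (x y : R) : Prop :=
  nu (fst (F x y)) (snd (F x y)) * jdet F x y = nu x y.

(* Main.v *)
Require Import Defs.
From Stdlib Require Import Reals Lra.
From Coquelicot Require Import Coquelicot.
Open Scope R_scope.

Lemma JY11 x y : J11 Y1 x y = 1 + 2*y.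
Proof. unfold J11, Y1; simpl. apply is_derive_unique. auto_derive; auto. ring. Qed.
Lemma JY12 x y : J12 Y1 x y = 2*x.
Proof. unfold J12, Y1; simpl. apply is_derive_unique. auto_derive; auto. ring. Qed.
Lemma JY21 x y : J21 Y1 x y = -2*x.
Proof. unfold J21, Y1; simpl. apply is_derive_unique. auto_derive; auto. ring. Qed.
Lemma JY22 x y : J22 Y1 x y = 1+2*y.
Proof. unfold J22, Y1; simpl. apply is_derive_unique. auto_derive; auto. ring. Qed.

Lemma JP11 e x y : Dphi e x y <> 0 -> J11 (Phi1 e) x y =
  ((-4*e*x + (1-e^2)) * Dphi e x y - (-2*e*x^2+(1-e^2)*x-2*e*y^2-2*e*y) * (8*e^2*x - 4*e)) / (Dphi e x y)^2.
Proof. intro H. unfold J11, Phi1; simpl. apply is_derive_unique. unfold Dphi in *. auto_derive. auto. field. auto. Qed.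
Lemma JP12 e x y : Dphi e x y <> 0 -> J12 (Phi1 e) x y =
  ((-4*e*y - 2*e) * Dphi e x y - (-2*e*x^2+(1-e^2)*x-2*e*y^2-2*e*y) * (8*e^2*y + 4*e^2)) / (Dphi e x y)^2.
Proof. intro H. unfold J12, Phi1; simpl. apply is_derive_unique. unfold Dphi in *. auto_derive. auto. field. auto. Qed.
Lemma JP21 e x y : Dphi e x y <> 0 -> J21 (Phi1 e) x y =
  ((-4*e^2*x + 2*e) * Dphi e x y - (-2*e^2*x^2+2*e*x-2*e^2*y^2+(1-e^2)*y) * (8*e^2*x - 4*e)) / (Dphi e x y)^2.
Proof. intro H. unfold J21, Phi1; simpl. apply is_derive_unique. unfold Dphi in *. auto_derive. auto. field. auto. Qed.
Lemma JP22 e x y : Dphi e x y <> 0 -> J22 (Phi1 e) x y =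
  ((-4*e^2*y + (1-e^2)) * Dphi e x y - (-2*e^2*x^2+2*e*x-2*e^2*y^2+(1-e^2)*y) * (8*e^2*y + 4*e^2)) / (Dphi e x y)^2.
Proof. intro H. unfold J22, Phi1; simpl. apply is_derive_unique. unfold Dphi in *. auto_derive. auto. field. auto. Qed.

Lemma partb e x y : Dphi e x y <> 0 -> lie_symmetry_at S1 (Phi1 e) x y.
Proof. intro H. unfold lie_symmetry_at. rewrite JP11, JP12, JP21, JP22 by auto.
unfold S1, Phi1; simpl. unfold Dphi in *. split; field; auto. Qed.

Lemma parta e x y : Dphi e x y <> 0 -> 1 + 2 * y <> 0 ->
     1 + 2 * snd (Phi1 e x y) <> 0 ->
     H1 (fst (Phi1 e x y)) (snd (Phi1 e x y)) = H1 x y.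
Proof. intros H H2 H3. unfold H1, Phi1 in *; cbn [fst snd] in *. unfold Dphi in *.
  set (D := 4 * e ^ 2 * x ^ 2 + 4 * e ^ 2 * y ^ 2 + 4 * e ^ 2 * y + e ^ 2 - 4 * e * x + 1) in *.
  set (N := (-2 * e ^ 2 * x ^ 2 + 2 * e * x - 2 * e ^ 2 * y ^ 2 + (1 - e ^ 2) * y)) in *.
  assert (E : 1 + 2 * (N / D) = (D + 2*N)/D) by (field; auto). rewrite E in H3.
  assert (H4 : D + 2 * N <> 0). { intro C. rewrite C in H3. apply H3. unfold Rdiv; ring. }
  field_simplify_eq; [unfold D, N; ring | tauto]. Qed.

Lemma partc e x y : Dphi e x y <> 0 -> 1 + 2 * y <> 0 ->
     1 + 2 * snd (Phi1 e x y) <> 0 ->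
     inv_measure_at nu1 (Phi1 e) x y.
Proof. intros H H2 H3. unfold inv_measure_at, jdet.
  rewrite JP11, JP12, JP21, JP22 by auto.
  unfold nu1, Phi1 in *; cbn [fst snd] in *. unfold Dphi in *.
  set (D := 4 * e ^ 2 * x ^ 2 + 4 * e ^ 2 * y ^ 2 + 4 * e ^ 2 * y + e ^ 2 - 4 * e * x + 1) in *.
  set (N := (-2 * e ^ 2 * x ^ 2 + 2 * e * x - 2 * e ^ 2 * y ^ 2 + (1 - e ^ 2) * y)) in *.
  assert (E : 1 + 2 * (N / D) = (D + 2*N)/D) by (field; auto). rewrite E in H3.
  assert (H4 : D + 2 * N <> 0). { intro C. rewrite C in H3. apply H3. unfold Rdiv; ring. }
  rewrite E. field_simplify_eq; [unfold D, N; ring | tauto]. Qed.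
Lemma partd eps delta x y :
     Dphi eps x y <> 0 -> khk_det delta Y1 x y <> 0 ->
     khk_det delta Y1 (fst (Phi1 eps x y)) (snd (Phi1 eps x y)) <> 0 ->
     Dphi eps (fst (Psi1 delta x y)) (snd (Psi1 delta x y)) <> 0 ->
     Psi1 delta (fst (Phi1 eps x y)) (snd (Phi1 eps x y)) =
     Phi1 eps (fst (Psi1 delta x y)) (snd (Psi1 delta x y)).
Proof.
  intros H1 H2 H3 H4.
  destruct (Phi1 eps x y) as [a b] eqn:Ephi.
  destruct (Psi1 delta x y) as [c f] eqn:Epsi.
  cbn [fst snd] in *.
  unfold Psi1, khk. unfold Phi1 at 1.
  set (kab := khk_det delta Y1 a b) in *.
  set (Dcf := Dphi eps c f) in *.
  rewrite !JY11, !JY12, !JY21, !JY22. unfold Y1; cbn [fst snd].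
  unfold Phi1 in Ephi. injection Ephi as Eb Ea.
  unfold Psi1, khk, khk_det in Epsi. rewrite !JY11, !JY12, !JY21, !JY22 in Epsi. unfold Y1 in Epsi; cbn [fst snd] in Epsi.
  injection Epsi as Ec Ef.
  unfold khk_det in H2. rewrite !JY11, !JY12, !JY21, !JY22 in H2.
  f_equal.
  - field_simplify_eq; [| tauto].
    unfold kab, Dcf, khk_det, Dphi. rewrite !JY11, !JY12, !JY21, !JY22.
    subst a b c f. unfold Dphi in *. field; split; [intro C; apply H2; rewrite <- C; ring | assumption].
  - field_simplify_eq; [| tauto].
    unfold kab, Dcf, khk_det, Dphi. rewrite !JY11, !JY12, !JY21, !JY22.
    subst a b c f. unfold Dphi in *. field; split; [intro C; apply H2; rewrite <- C; ring | assumption].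
Qed.

Theorem proposition8 :
  forall eps : R,
  (forall x y : R,
     Dphi eps x y <> 0 -> 1 + 2 * y <> 0 ->
     1 + 2 * snd (Phi1 eps x y) <> 0 ->
     H1 (fst (Phi1 eps x y)) (snd (Phi1 eps x y)) = H1 x y) /\
  (forall x y : R, Dphi eps x y <> 0 -> lie_symmetry_at S1 (Phi1 eps) x y) /\
  (forall x y : R,
     Dphi eps x y <> 0 -> 1 + 2 * y <> 0 ->
     1 + 2 * snd (Phi1 eps x y) <> 0 ->
     inv_measure_at nu1 (Phi1 eps) x y) /\
  (forall delta x y : R,
     Dphi eps x y <> 0 -> khk_det delta Y1 x y <> 0 ->
     khk_det delta Y1 (fst (Phi1 eps x y)) (snd (Phi1 eps x y)) <> 0 ->
     Dphi eps (fst (Psi1 delta x y)) (snd (Psi1 delta x y)) <> 0 ->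
     Psi1 delta (fst (Phi1 eps x y)) (snd (Phi1 eps x y)) =
     Phi1 eps (fst (Psi1 delta x y)) (snd (Psi1 delta x y))).
Proof.
  intro eps. split; [|split; [|split]].
  - intros; apply parta; auto.
  - intros; apply partb; auto.
  - intros; apply partc; auto.
  - intros; apply partd; auto.
Qed.
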